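(* Let $N\ge3$ be odd, $n\ge1$, $\tilde J>0$, $J_i=\tilde J/N^i$ for $1\le i\le n$, and let $0\le m\le n-1$ and $1\le s\le N$ be integers. Write $H_i=\mathcal H(h^{(m,s)};\gamma_i)$. If $s$ is odd, then $$H_{\lfloor sN^m/2\rfloor}=H_{\lfloor sN^m/2\rfloor+1}=\max_{1\le i\le sN^m}H_i=\max_{1\le i\le N^n}H_i,$$ and $H_i<H_{\lfloor sN^m/2\rfloor}$ for all $0\le i<\lfloor sN^m/2\rfloor$. If $s$ is even, then $$H_{\lfloor(s-1)N^m/2\rfloor+1}=\max_{1\le i\le sN^m}H_i=\max_{1\le i\le N^n}H_i,$$ and $H_i<H_{\lfloor(s-1)N^m/2\rfloor+1}$ for all $0\le i<\lfloor(s-1)N^m/2\rfloor+1$.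
   Context: Hierarchical lattice $\Lambda_N^n=\{1,\dots,N^n\}$; $k$-blocks are $\{jN^k+1,\dots,(j+1)N^k\}$; $d(a,b)$ is the smallest $k\ge0$ with $a,b$ in a common $k$-block. For a field $h$, $\mathcal H(h;\sigma)=-\frac12\sum_{\{v,w\},v\ne w}J_{d(v,w)}\sigma(v)\sigma(w)-\frac h2\sum_v\sigma(v)$ (unordered pairs). $\gamma_k$ is the configuration with $+1$ exactly on $\{1,\dots,k\}$ ($0\le k\le N^n$). $h^{(m,s)}=\tilde J\big[(1-\frac1N)(n-m)-(s-1)\frac1N\big]$. *)

(* Defs.v *)
From mathcomp Require Import all_boot all_order all_algebra.
Set Implicit Arguments. Unset Strict Implicit. Unset Printing Implicit Defensive.
Import Order.TTheory GRing.Theory Num.Theory.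
Local Open Scope ring_scope.

(* Sites of Lambda_N^n are encoded 0-based: site v in {1,...,N^n} is the
   natural number v-1 in {0,...,N^n - 1}.  The k-block
   {jN^k+1,...,(j+1)N^k} then becomes {jN^k,...,(j+1)N^k - 1}, i.e. the
   0-based sites a with a %/ N^k = j. *)

Definition hdist (N n a b : nat) : nat :=
  find (fun k : nat => (a %/ N ^ k == b %/ N ^ k)%N) (iota 0 n.+1).

Definition Ham {R : realFieldType} (N n : nat) (J : nat -> R) (h : R)
    (sigma : nat -> R) : R :=
  - (1 / 2) * (\sum_(v < N ^ n) \sum_(w < N ^ n | (v < w)%N)
                 J (hdist N n v w) * sigma v * sigma w)
  - h / 2 * \sum_(v < N ^ n) sigma v.

Definition gamma {R : realFieldType} (k : nat) : nat -> R :=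
  fun v => if (v < k)%N then 1 else -1.

Definition hms {R : realFieldType} (Jt : R) (N n m s : nat) : R :=
  Jt * ((1 - 1 / N%:R) * (n - m)%:R - (s - 1)%:R / N%:R).

Definition maxRange {R : realFieldType} (f : nat -> R) (a b : nat) : R :=
  \big[Num.max/f a]_(a <= i < b.+1) f i.

(* Main.v *)
Require Import Defs.
From mathcomp Require Import all_boot all_order all_algebra.
From mathcomp Require Import zify ring lra.
Set Implicit Arguments. Unset Strict Implicit. Unset Printing Implicit Defensive.
Import Order.TTheory GRing.Theory Num.Theory.
Local Open Scope ring_scope.

Lemma hd_mono (N a b e d : nat) : (a %/ N ^ e = b %/ N ^ e)%N -> (a %/ N ^ (e+d) = b %/ N ^ (e+d))%N.
Proof. by rewrite expnD !divnMA => ->. Qed.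

Lemma hdist_le (N n a b e : nat) : (0 < N)%N -> (a < N ^ n)%N -> (b < N ^ n)%N -> (e <= n)%N ->
  (hdist N n a b <= e)%N = (a %/ N ^ e == b %/ N ^ e)%N.
Proof.
move=> N0 ha hb hen; rewrite /hdist.
set P := (fun k : nat => _).
have Pn : P n by rewrite /P !divn_small.
have hasP : has P (iota 0 n.+1).
  by apply/hasP; exists n => //; rewrite mem_iota /=; lia.
apply/idP/idP.
- move=> hle.
  have hf : (find P (iota 0 n.+1) < n.+1)%N by rewrite -{2}(size_iota 0 n.+1) -has_find.
  have := nth_find 0 hasP; rewrite nth_iota // add0n /P => /eqP Hf.
  apply/eqP; have -> : e = (find P (iota 0 n.+1) + (e - find P (iota 0 n.+1)))%N by lia.
  exact: hd_mono.
- move=> He; rewrite leqNgt; apply/negP => hlt.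
  have := before_find 0 hlt; rewrite nth_iota ?add0n; last by lia.
  by rewrite /P He.
Qed.

Lemma hdist_pos (N n a b : nat) : (0 < N)%N -> (a < N ^ n)%N -> (b < N ^ n)%N -> a != b ->
  (0 < hdist N n a b <= n)%N.
Proof.
move=> N0 ha hb hab; apply/andP; split.
  by rewrite lt0n -leqn0 hdist_le // !expn0 !divn1.
by rewrite hdist_le // !divn_small.
Qed.

Lemma count_int (M lo hi : nat) : (hi <= M)%N ->
  (\sum_(v < M) ((lo <= v) && (v < hi))%N : nat)%N = (hi - lo)%N.
Proof.
elim: M hi => [|M IH] hi hhi.
  by rewrite big_ord0; lia.
rewrite big_ord_recr /=.
case: (ltngtP hi M.+1) => h; last first.
- subst hi.
  rewrite (eq_bigr (fun v : 'I_M => ((lo <= v) && (v < M))%N : nat)); last first.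
    move=> i _ /=; have h1 := ltn_ord i; have -> : (i < M.+1)%N by lia.
    by rewrite h1.
  rewrite IH //=; case: (leqP lo M) => /= h2; rewrite ?ltnSn /=; lia.
- lia.
- by rewrite andbF addn0 IH //; lia.
Qed.

Fixpoint ds (N n k : nat) : nat :=
  if n is n'.+1 then (k %% N + ds N n' (k %/ N))%N else 0%N.

Lemma ds_sum (N n k : nat) : ds N n k = (\sum_(d < n) (k %/ (N ^ d)%N %% N)%N)%N.
Proof.
elim: n k => [|n IH] k /=; first by rewrite big_ord0.
rewrite big_ord_recl /= expn0 divn1 IH; congr (_ + _)%N.
apply: eq_bigr => i _; rewrite /bump /= add1n expnS divnMA //.
Qed.

Lemma mod_step (N d k : nat) : (0 < N)%N ->
  (k %% (N ^ d.+1)%N = k %% (N ^ d)%N + (N ^ d)%N * (k %/ (N ^ d)%N %% N))%N.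
Proof.
move=> N0.
rewrite modn_divl expnS.
set x := (k %% (N * N ^ d))%N.
have hx : (x %% N ^ d = k %% N ^ d)%N by rewrite /x (modn_dvdm _ (dvdn_mull _ (dvdnn _))).
by rewrite {1}(divn_eq x (N ^ d)) hx addnC mulnC.
Qed.

Lemma sum_delta (R : realFieldType) (F : nat -> R) (M k : nat) : (k < M)%N ->
  \sum_(v < M) F v * ((v == k :> nat) %:R) = F k.
Proof.
move=> hk; rewrite (bigD1 (Ordinal hk)) //= eqxx mulr1 big1 ?addr0 // => i hi.
have -> : (i == k :> nat) = false.
  apply/negbTE/negP => /eqP h; move/negP: hi; apply; apply/eqP/val_inj => /=. done.
by rewrite mulr0.
Qed.

Lemma cntA (R : realFieldType) (N n k e : nat) : (0 < N)%N -> (k < N ^ n)%N -> (e <= n)%N ->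
  \sum_(v < N ^ n) (((v < k) && (hdist N n v k <= e))%N%:R : R) = (k %% N ^ e)%N%:R.
Proof.
move=> N0 hk he.
have pe : (0 < N ^ e)%N by rewrite expn_gt0 N0.
rewrite -natr_sum; congr (_ %:R).
rewrite (eq_bigr (fun v : 'I_(N ^ n) => ((k - k %% N ^ e <= v) && (v < k))%N : nat)); last first.
  move=> v _; case hvk: (v < k)%N; rewrite /= ?andbF ?andbT //.
  rewrite hdist_le //.
  have -> : (k - k %% N ^ e = k %/ N ^ e * N ^ e)%N by rewrite {1}(divn_eq k (N ^ e)) addnK.
  by rewrite -leq_divRL // eqn_leq (leq_div2r _ (ltnW hvk)).
rewrite count_int; last by lia.
have := leq_mod k (N ^ e); lia.
Qed.

Lemma cntB (R : realFieldType) (N n k e : nat) : (0 < N)%N -> (k < N ^ n)%N -> (e <= n)%N ->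
  \sum_(w < N ^ n) (((k < w) && (hdist N n k w <= e))%N%:R : R) = (N ^ e)%:R - 1 - (k %% N ^ e)%N%:R.
Proof.
move=> N0 hk he.
have pe : (0 < N ^ e)%N by rewrite expn_gt0 N0.
set q := (k %/ N ^ e)%N.
have hq : (q.+1 * N ^ e <= N ^ n)%N.
  have : (q < N ^ (n-e))%N by rewrite /q ltn_divLR // -expnD subnK.
  move=> h; apply: (@leq_trans (N ^ (n-e) * N ^ e)); first by rewrite leq_mul2r h orbT.
  by rewrite -expnD subnK.
rewrite -natr_sum.
rewrite (eq_bigr (fun w : 'I_(N ^ n) => ((k.+1 <= w) && (w < q.+1 * N ^ e))%N : nat)); last first.
  move=> w _; case hkw: (k < w)%N; rewrite /= ?andbF ?andbT //.
  rewrite hdist_le //.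
  by rewrite -ltn_divLR // ltnS eqn_leq (leq_div2r _ (ltnW hkw)).
rewrite count_int //.
have hdk := divn_eq k (N ^ e).
have hr := ltn_pmod k pe.
have -> : (q.+1 * N ^ e - k.+1 = (N ^ e - 1) - k %% N ^ e)%N.
  rewrite mulSn; rewrite /q; lia.
rewrite natrB; last by lia.
by rewrite natrB.
Qed.

Lemma indic (R : realFieldType) (x d : nat) : (0 < x)%N ->
  ((x <= d.+1)%N%:R - (x <= d)%N%:R : R) = (d == x.-1)%N%:R.
Proof.
move=> x0; case: (ltngtP x d.+1) => h.
- have -> : (x <= d)%N = true by lia.
  have -> : (d == x.-1)%N = false by apply/negbTE/eqP; lia.
  by rewrite subrr.
- have -> : (x <= d)%N = false by lia.
  have -> : (d == x.-1)%N = false by apply/negbTE/eqP; lia.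
  by rewrite subrr.
- have -> : (x <= d)%N = false by lia.
  have -> : (d == x.-1)%N = true by apply/eqP; lia.
  by rewrite subr0.
Qed.

Lemma J_expand (R : realFieldType) (J : nat -> R) (n x : nat) : (0 < x <= n)%N ->
  J x = \sum_(d < n) J d.+1 * ((x <= d.+1)%N%:R - (x <= d)%N%:R).
Proof.
move=> /andP [x0 xn].
rewrite (eq_bigr (fun d : 'I_n => J d.+1 * ((d == x.-1 :> nat)%:R))); last first.
  by move=> d _; rewrite indic.
rewrite (sum_delta (fun d => J d.+1)); last by lia.
by rewrite prednK.
Qed.

Lemma A_val (R : realFieldType) (N n : nat) (Jt : R) (J : nat -> R) (k : nat) :
  (0 < N)%N -> (k < N ^ n)%N -> (forall i, (1 <= i <= n)%N -> J i = Jt / (N ^ i)%:R) ->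
  \sum_(v < N ^ n) (v < k)%N%:R * J (hdist N n v k) = Jt / N%:R * (ds N n k)%:R.
Proof.
move=> N0 hk hJ.
rewrite (eq_bigr (fun v : 'I_(N ^ n) => \sum_(d < n) J d.+1 *
   (((v < k) && (hdist N n v k <= d.+1))%N%:R - ((v < k) && (hdist N n v k <= d))%N%:R))); last first.
  move=> v _; case hvk: (v < k)%N.
  - rewrite (_ : (true%:R : R) = 1) // mul1r; apply: J_expand; apply: hdist_pos => //.
    by rewrite neq_ltn hvk.
  - rewrite (_ : (false%:R : R) = 0) // mul0r big1 // => d _.
    by rewrite /= subrr mulr0.
rewrite exchange_big /=.
have NR : (N%:R : R) != 0 by rewrite pnatr_eq0; lia.
rewrite (eq_bigr (fun d : 'I_n => Jt / N%:R * (k %/ N ^ d %% N)%N%:R)); last first.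
  move=> d _; rewrite -mulr_sumr sumrB !cntA //; last by apply: ltnW.
  rewrite mod_step // natrD addrAC subrr add0r natrM hJ; last by apply/andP; split => //.
  have NdR : ((N ^ d)%N%:R : R) != 0 by rewrite pnatr_eq0 expn_eq0; lia.
  rewrite expnS natrM; field; by apply/andP.
by rewrite -mulr_sumr -natr_sum ds_sum.
Qed.

Lemma B_val (R : realFieldType) (N n : nat) (Jt : R) (J : nat -> R) (k : nat) :
  (0 < N)%N -> (k < N ^ n)%N -> (forall i, (1 <= i <= n)%N -> J i = Jt / (N ^ i)%:R) ->
  \sum_(w < N ^ n) (k < w)%N%:R * J (hdist N n k w) =
    Jt / N%:R * (n%:R * (N%:R - 1) - (ds N n k)%:R).
Proof.
move=> N0 hk hJ.
rewrite (eq_bigr (fun w : 'I_(N ^ n) => \sum_(d < n) J d.+1 *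
   (((k < w) && (hdist N n k w <= d.+1))%N%:R - ((k < w) && (hdist N n k w <= d))%N%:R))); last first.
  move=> w _; case hkw: (k < w)%N.
  - rewrite (_ : (true%:R : R) = 1) // mul1r; apply: J_expand; apply: hdist_pos => //.
    by rewrite neq_ltn hkw.
  - rewrite (_ : (false%:R : R) = 0) // mul0r big1 // => d _.
    by rewrite /= subrr mulr0.
rewrite exchange_big /=.
have NR : (N%:R : R) != 0 by rewrite pnatr_eq0; lia.
rewrite (eq_bigr (fun d : 'I_n => Jt / N%:R * ((N%:R - 1) - (k %/ N ^ d %% N)%N%:R))); last first.
  move=> d _; rewrite -mulr_sumr sumrB !cntB //; last by apply: ltnW.
  rewrite mod_step // natrD natrM hJ; last by apply/andP; split => //.
  have NdR : ((N ^ d)%N%:R : R) != 0 by rewrite pnatr_eq0 expn_eq0; lia.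
  rewrite !expnS !natrM; field; by apply/andP.
rewrite -mulr_sumr sumrB sumr_const card_ord -natr_sum ds_sum.
by rewrite mulr_natl.
Qed.

Lemma pair_pt (R : realFieldType) (k v w : nat) (x : R) :
  (if (v < w)%N then x * gamma k.+1 v * gamma k.+1 w - x * gamma k v * gamma k w else 0)
  = 2 * ((v < k)%N%:R * x) * (w == k)%N%:R - 2 * ((k < w)%N%:R * x) * (v == k)%N%:R.
Proof.
rewrite /gamma !ltnS.
case: (ltngtP v k) => hv; case: (ltngtP w k) => hw; case: (ltnP v w) => hvw;
  try (exfalso; lia); subst; rewrite /= ?eqxx ?ltnn ?hv ?hw; try ring.
Qed.

Lemma ham_step (R : realFieldType) (N n : nat) (J : nat -> R) (h : R) (k : nat) :
  (k < N ^ n)%N ->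
  Ham N n J h (gamma k.+1) - Ham N n J h (gamma k) =
   \sum_(w < N ^ n) (k < w)%N%:R * J (hdist N n k w)
   - \sum_(v < N ^ n) (v < k)%N%:R * J (hdist N n v k) - h.
Proof.
move=> hk; rewrite /Ham.
have eS : \sum_(v < N ^ n) (gamma k.+1 v : R) = \sum_(v < N ^ n) gamma k v + 2.
  have : \sum_(v < N ^ n) ((gamma k.+1 v : R) - gamma k v) = 2.
    rewrite (eq_bigr (fun v : 'I_(N ^ n) => (fun _ => (2:R)) (v : nat) * (v == k :> nat)%:R)).
      exact: (sum_delta (fun _ => (2:R)) hk).
    move=> v _; rewrite /gamma ltnS /=.
    by case: (ltngtP v k) => hv; rewrite /= ?eqxx ?hv; ring.
  by rewrite sumrB => <-; rewrite addrC subrK.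
have eP : \sum_(v < N ^ n) \sum_(w < N ^ n | (v < w)%N) J (hdist N n v w) * gamma k.+1 v * gamma k.+1 w
   = \sum_(v < N ^ n) \sum_(w < N ^ n | (v < w)%N) J (hdist N n v w) * gamma k v * gamma k w
     + (2 * \sum_(v < N ^ n) (v < k)%N%:R * J (hdist N n v k) - 2 * \sum_(w < N ^ n) (k < w)%N%:R * J (hdist N n k w)).
  match goal with |- ?P1 = ?P0 + ?D => suff e : P1 - P0 = D by rewrite -e addrC subrK end.
  rewrite -sumrB.
  rewrite (eq_bigr (fun v : 'I_(N ^ n) =>
     \sum_(w < N ^ n) (2 * (((v < k)%N%:R : R) * J (hdist N n v w)) * (w == k :> nat)%:R
        - 2 * ((k < w)%N%:R * J (hdist N n v w)) * (v == k :> nat)%:R))); last first.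
    move=> v _; rewrite -sumrB big_mkcond /=; apply: eq_bigr => w _.
    exact: pair_pt.
  under eq_bigr do rewrite sumrB.
  rewrite sumrB.
  have e1 : \sum_(v < N ^ n) \sum_(w < N ^ n) 2 * (((v < k)%N%:R : R) * J (hdist N n v w)) * (w == k :> nat)%:R
      = 2 * \sum_(v < N ^ n) (v < k)%N%:R * J (hdist N n v k).
    rewrite mulr_sumr; apply: eq_bigr => v _.
    exact: (sum_delta (fun w => 2 * (((v < k)%N%:R : R) * J (hdist N n v w))) hk).
  have e2 : \sum_(v < N ^ n) \sum_(w < N ^ n) 2 * (((k < w)%N%:R : R) * J (hdist N n v w)) * (v == k :> nat)%:R
      = 2 * \sum_(w < N ^ n) (k < w)%N%:R * J (hdist N n k w).
    under eq_bigr do rewrite -mulr_suml.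
    rewrite (sum_delta (fun v => \sum_(w < N ^ n) 2 * (((k < w)%N%:R : R) * J (hdist N n v w))) hk).
    by rewrite mulr_sumr.
  by rewrite e1 e2.
rewrite eS eP.
have h2 : (2 : R) != 0 by rewrite pnatr_eq0.
by field.
Qed.

Definition FF (N n : nat) (c : int) (k : nat) : int :=
  \sum_(j < k) (c - 2 * (ds N n j)%:Z).

Lemma FF0 N n c : FF N n c 0 = 0.
Proof. by rewrite /FF big_ord0. Qed.

Lemma FF_S N n c k : FF N n c k.+1 = FF N n c k + (c - 2 * (ds N n k)%:Z).
Proof. by rewrite /FF big_ord_recr. Qed.

Lemma ds0 N n : ds N n 0 = 0%N.
Proof. by elim: n => //= n IH; rewrite mod0n div0n IH. Qed.

Lemma ds_step N n b a : (a < N)%N -> ds N n.+1 (b * N + a) = (a + ds N n b)%N.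
Proof.
move=> aN /=.
have N0 : (0 < N)%N by lia.
by rewrite modnMDl modn_small // divnMDl // divn_small // addn0.
Qed.

Lemma FF_part N n c b a : (a <= N)%N ->
  FF N n.+1 c (b * N + a) = FF N n.+1 c (b * N) + a%:Z * c - (a%:Z * a%:Z - a%:Z)
     - 2 * a%:Z * (ds N n b)%:Z.
Proof.
elim: a => [|a IH] ha.
  rewrite addn0; ring.
rewrite addnS FF_S IH; last by lia.
rewrite ds_step; last by lia.
rewrite !PoszD !intS; ring.
Qed.

Lemma FF_mulN N n c c' b : (0 < N)%N -> c' = c - (N%:Z - 1) ->
  FF N n.+1 c (b * N) = N%:Z * FF N n c' b.
Proof.
move=> N0 ->; elim: b => [|b IH]; first by rewrite mul0n !FF0 mulr0.
rewrite mulSnr FF_part // IH FF_S; ring.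
Qed.

Lemma FF_rec N n c c' b a : (0 < N)%N -> (a <= N)%N -> c' = c - (N%:Z - 1) ->
  FF N n.+1 c (b * N + a) =
   (N%:Z - a%:Z) * FF N n c' b + a%:Z * FF N n c' b.+1 + a%:Z * (N%:Z - a%:Z).
Proof.
move=> N0 aN hc; rewrite FF_part // (FF_mulN n b N0 hc) FF_S hc; ring.
Qed.

Lemma FF_neg N n c b : c <= 0 -> FF N n c b <= c * b%:Z.
Proof.
move=> c0; elim: b => [|b IH]; first by rewrite FF0 mulr0.
rewrite FF_S; have : (0 <= (ds N n b)%:Z)%R by [].
rewrite intS; nia.
Qed.

Lemma ar1 (a p : int) : a * (2 * p + 1 - a) <= p * (p + 1).
Proof. case: (lerP a p) => h; nia. Qed.

Lemma ar2 (a p : int) : 0 <= a -> a < p -> a * (2 * p + 1 - a) < p * (p + 1).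
Proof. move=> h0 h1; nia. Qed.

Lemma ar3 (a p : int) : (a - 1) * (2 * p + 1 - a) <= p * p.
Proof. have := sqr_ge0 (a - 1 - p); rewrite expr2; nia. Qed.

Lemma ar4 (a p : int) : a * (2 * p - a) <= p * p.
Proof. have := sqr_ge0 (a - p); rewrite expr2; nia. Qed.

Lemma ar5 (a p : int) : a <= p -> (a - 1) * (2 * p + 1 - a) < p * p.
Proof. move=> h; have h1 : 1 <= p + 1 - a by lia.
have h2 : 1 <= (p + 1 - a) * (p + 1 - a) by nia.
nia. Qed.

Lemma half_step x N p : N = (2 * p + 1)%N -> odd x -> ((x * N) %/ 2 = (x %/ 2) * N + p)%N.
Proof.
move=> hN ox.
have hx : x = ((x %/ 2) * 2 + 1)%N by rewrite {1}(divn_eq x 2) modn2 ox.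
set q := (x %/ 2)%N; rewrite hx hN.
have -> : ((q * 2 + 1) * (2 * p + 1) = (q * (2 * p + 1) + p) * 2 + 1)%N by ring.
by rewrite divnMDl // divn_small // addn0.
Qed.

Lemma oddN2 N p : N = (2 * p + 1)%N -> odd N.
Proof. by move=> ->; rewrite addn1 /= mul2n odd_double. Qed.

Definition cc (N m s : nat) : int := m%:Z * (N%:Z - 1) + s%:Z - 1.

Lemma main_odd (N p : nat) : N = (2 * p + 1)%N -> (0 < p)%N ->
  forall m n s, (m < n)%N -> odd s -> (0 < s <= N)%N ->
  [/\ FF N n (cc N m s) (s * N ^ m %/ 2)%N = FF N n (cc N m s) (s * N ^ m %/ 2).+1,
      (forall i, FF N n (cc N m s) i <= FF N n (cc N m s) (s * N ^ m %/ 2)%N)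
    & (forall i, (i < s * N ^ m %/ 2)%N -> FF N n (cc N m s) i < FF N n (cc N m s) (s * N ^ m %/ 2)%N)].
Proof.
move=> hN p0; have N0 : (0 < N)%N by lia.
have NZ : N%:Z = 2 * p%:Z + 1 by rewrite hN; lia.
elim=> [|m IH] [|n] s // hmn hs hsN; case/andP: (hsN) => s0 sN.
-
  rewrite expn0 muln1.
  set t := (s %/ 2)%N.
  have hst : s = (2 * t + 1)%N by rewrite {1}(divn_eq s 2) modn2 hs /t; lia.
  clearbody t.
  have hc : (s%:Z - N%:Z) = cc N 0 s - (N%:Z - 1) by rewrite /cc; ring.
  have Fs : forall a, (a <= N)%N -> FF N n.+1 (cc N 0 s) a = a%:Z * (s%:Z - a%:Z).
    move=> a ha; have := FF_rec n 0 N0 ha hc; rewrite mul0n add0n => ->.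
    rewrite FF_S !FF0 ds0; ring.
  have Fb : forall i, (N <= i)%N -> FF N n.+1 (cc N 0 s) i <=
       N%:Z * (s%:Z - N%:Z) + (i %% N)%:Z * (N%:Z - (i %% N)%:Z).
    move=> i hi; rewrite {1}(divn_eq i N) (FF_rec n _ N0 (ltnW (ltn_pmod i N0)) hc).
    set b := (i %/ N)%N; set a := (i %% N)%N.
    have b1 : (1 <= b)%N by rewrite /b divn_gt0.
    have ha : (a < N)%N by rewrite /a ltn_pmod.
    have c0 : s%:Z - N%:Z <= 0 by lia.
    have hx := FF_neg N n b c0; have hy := FF_neg N n b.+1 c0.
    have hcb : (s%:Z - N%:Z) * b%:Z <= 0 by apply: mulr_le0_ge0.
    have hcb1 : (s%:Z - N%:Z) * (b%:Z - 1) <= 0 by apply: mulr_le0_ge0 => //; lia.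
    have hx' : FF N n (s%:Z - N%:Z) b <= s%:Z - N%:Z by lia.
    have hy' : FF N n (s%:Z - N%:Z) b.+1 <= s%:Z - N%:Z by lia.
    have h1 : 0 <= (N%:Z - a%:Z) * ((s%:Z - N%:Z) - FF N n (s%:Z - N%:Z) b) by apply: mulr_ge0; lia.
    have h2 : 0 <= a%:Z * ((s%:Z - N%:Z) - FF N n (s%:Z - N%:Z) b.+1) by apply: mulr_ge0; lia.
    lia.
  split.
  + rewrite !Fs; lia.
  + move=> i; case: (ltnP i N) => hi.
    * rewrite (Fs i) ?(Fs t); try lia.
      have := ar1 i%:Z t%:Z; rewrite hst; clear Fs Fb hc; lia.
    * have := Fb i hi; rewrite (Fs t); last by lia.
      have := ar1 (i %% N)%:Z p%:Z.
      have tp : (t <= p)%N by lia.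
      have h1 : 0 <= (p%:Z - t%:Z) * p%:Z by apply: mulr_ge0; lia.
      have h2 : 0 <= (p%:Z - t%:Z) * (p%:Z - t%:Z) by apply: mulr_ge0; lia.
      rewrite hst NZ; lia.
  + move=> i hi.
    rewrite (Fs i) ?(Fs t); try lia.
    have := @ar2 (i%:Z) (t%:Z); rewrite hst; lia.
-
  have hmn' : (m < n)%N by lia.
  have [e1 e2 e3] := IH n s hmn' hs hsN.
  set K' := (s * N ^ m %/ 2)%N.
  have hK : (s * N ^ m.+1 %/ 2 = K' * N + p)%N.
    by rewrite expnSr mulnA (half_step hN) // oddM oddX hs (oddN2 hN) orbT.
  rewrite hK.
  have hc : (cc N m s) = cc N m.+1 s - (N%:Z - 1) by rewrite /cc intS; ring.
  have [M' eM] : exists M', FF N n (cc N m s) K' = M' by eexists.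
  rewrite eM in e2 e3.
  have FK : forall a, (a <= N)%N -> FF N n.+1 (cc N m.+1 s) (K' * N + a) =
      (N%:Z - a%:Z) * M' + a%:Z * M' + a%:Z * (N%:Z - a%:Z).
    by move=> a ha; rewrite (FF_rec n K' N0 ha hc) -e1 eM.
  split.
  + rewrite -addnS !FK; lia.
  + move=> i; rewrite {1}(divn_eq i N) (FF_rec n _ N0 (ltnW (ltn_pmod i N0)) hc) FK; last by lia.
    set b := (i %/ N)%N; set a := (i %% N)%N.
    have ha : (a < N)%N by rewrite /a ltn_pmod.
    have hx := e2 b; have hy := e2 b.+1.
    have h1 : 0 <= (N%:Z - a%:Z) * (M' - FF N n (cc N m s) b) by apply: mulr_ge0; lia.
    have h2 : 0 <= a%:Z * (M' - FF N n (cc N m s) b.+1) by apply: mulr_ge0; lia.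
    have h3 := ar1 a%:Z p%:Z.
    rewrite NZ in h1 *; lia.
  + move=> i hi.
    have hb : (i %/ N <= K')%N by rewrite -ltnS ltn_divLR //; lia.
    have hdi := divn_eq i N.
    rewrite {1}(divn_eq i N) (FF_rec n _ N0 (ltnW (ltn_pmod i N0)) hc) FK; last by lia.
    set b := (i %/ N)%N in hb hdi *; set a := (i %% N)%N in hdi *.
    have ha : (a < N)%N by rewrite /a ltn_pmod.
    move: hb; rewrite leq_eqVlt => /orP [/eqP hb | hb].
    * rewrite hb -e1 eM.
      have hap : (a < p)%N by rewrite hb in hdi; lia.
      have h3 := @ar2 a%:Z p%:Z.
      rewrite NZ; lia.
    * have hx := e3 b hb; have hy := e2 b.+1.
      have h1 : 0 <= (N%:Z - a%:Z) * (M' - FF N n (cc N m s) b - 1) by apply: mulr_ge0; lia.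
      have h2 : 0 <= a%:Z * (M' - FF N n (cc N m s) b.+1) by apply: mulr_ge0; lia.
      have h3 := ar1 a%:Z p%:Z.
      rewrite NZ in h1 *; lia.
Qed.

Lemma ar6 (a q : int) : a < q -> a * (2 * q - a) < q * q.
Proof. move=> h; have h1 : 1 <= q - a by lia.
have h2 : 1 <= (q - a) * (q - a) by nia. nia. Qed.

Lemma main_even (N p : nat) : N = (2 * p + 1)%N -> (0 < p)%N ->
  forall m n s, (m < n)%N -> ~~ odd s -> (0 < s <= N)%N ->
  [/\ FF N n (cc N m s) ((s - 1) * N ^ m %/ 2).+1 = FF N n (cc N m s) ((s - 1) * N ^ m %/ 2)%N + 1,
      (forall i, FF N n (cc N m s) i <= FF N n (cc N m s) ((s - 1) * N ^ m %/ 2).+1)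
    & (forall i, (i < ((s - 1) * N ^ m %/ 2).+1)%N ->
         FF N n (cc N m s) i < FF N n (cc N m s) ((s - 1) * N ^ m %/ 2).+1)].
Proof.
move=> hN p0; have N0 : (0 < N)%N by lia.
have NZ : N%:Z = 2 * p%:Z + 1 by rewrite hN; lia.
have oN := oddN2 hN.
elim=> [|m IH] [|n] s // hmn hs hsN; case/andP: (hsN) => s0 sN.
-
  rewrite expn0 muln1.
  have hs1 : odd (s - 1) by rewrite oddB // (negbTE hs).
  set t := ((s - 1) %/ 2)%N.
  have hst : s = (2 * t + 2)%N by rewrite /t; have := divn_eq (s - 1) 2; rewrite modn2 hs1; lia.
  clearbody t.
  have sN1 : (s < N)%N.
    rewrite ltn_neqAle sN andbT; apply/negP => /eqP e; move: hs; rewrite e oN //.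
  have hc : (s%:Z - N%:Z) = cc N 0 s - (N%:Z - 1) by rewrite /cc; ring.
  have Fs : forall a, (a <= N)%N -> FF N n.+1 (cc N 0 s) a = a%:Z * (s%:Z - a%:Z).
    move=> a ha; have := FF_rec n 0 N0 ha hc; rewrite mul0n add0n => ->.
    rewrite FF_S !FF0 ds0; ring.
  have Fb : forall i, (N <= i)%N -> FF N n.+1 (cc N 0 s) i <=
       N%:Z * (s%:Z - N%:Z) + (i %% N)%:Z * (N%:Z - (i %% N)%:Z).
    move=> i hi; rewrite {1}(divn_eq i N) (FF_rec n _ N0 (ltnW (ltn_pmod i N0)) hc).
    set b := (i %/ N)%N; set a := (i %% N)%N.
    have b1 : (1 <= b)%N by rewrite /b divn_gt0.
    have ha : (a < N)%N by rewrite /a ltn_pmod.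
    have c0 : s%:Z - N%:Z <= 0 by lia.
    have hx := FF_neg N n b c0; have hy := FF_neg N n b.+1 c0.
    have hcb : (s%:Z - N%:Z) * b%:Z <= 0 by apply: mulr_le0_ge0.
    have hcb1 : (s%:Z - N%:Z) * (b%:Z - 1) <= 0 by apply: mulr_le0_ge0 => //; lia.
    have hx' : FF N n (s%:Z - N%:Z) b <= s%:Z - N%:Z by lia.
    have hy' : FF N n (s%:Z - N%:Z) b.+1 <= s%:Z - N%:Z by lia.
    have h1 : 0 <= (N%:Z - a%:Z) * ((s%:Z - N%:Z) - FF N n (s%:Z - N%:Z) b) by apply: mulr_ge0; lia.
    have h2 : 0 <= a%:Z * ((s%:Z - N%:Z) - FF N n (s%:Z - N%:Z) b.+1) by apply: mulr_ge0; lia.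
    lia.
  split.
  + rewrite (Fs t.+1) ?(Fs t); lia.
  + move=> i; case: (ltnP i N) => hi.
    * rewrite (Fs i) ?(Fs t.+1); try lia.
      have := ar4 i%:Z (t.+1)%:Z; rewrite hst; lia.
    * have := Fb i hi; rewrite (Fs t.+1); last by lia.
      have := ar1 (i %% N)%:Z p%:Z.
      have tp : (t.+1 <= p)%N by lia.
      have h1 : 0 <= (p%:Z - (t.+1)%:Z) * p%:Z by apply: mulr_ge0; lia.
      have h2 : 0 <= (p%:Z - (t.+1)%:Z) * (p%:Z - (t.+1)%:Z) by apply: mulr_ge0; lia.
      rewrite hst NZ; lia.
  + move=> i hi.
    rewrite (Fs i) ?(Fs t.+1); try lia.
    have := @ar6 (i%:Z) ((t.+1)%:Z); rewrite hst; lia.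
-
  have hmn' : (m < n)%N by lia.
  have [e1 e2 e3] := IH n s hmn' hs hsN.
  set B' := ((s - 1) * N ^ m %/ 2)%N.
  have hB : ((s - 1) * N ^ m.+1 %/ 2 = B' * N + p)%N.
    by rewrite expnSr mulnA (half_step hN) // oddM oddX oddB // (negbTE hs) oN orbT.
  rewrite hB.
  have hc : cc N m s = cc N m.+1 s - (N%:Z - 1) by rewrite /cc intS; ring.
  have [M' eM] : exists M', FF N n (cc N m s) B'.+1 = M' by eexists.
  rewrite eM in e1 e2 e3.
  have eX : FF N n (cc N m s) B' = M' - 1 by rewrite e1; ring.
  have FK : forall a, (a <= N)%N -> FF N n.+1 (cc N m.+1 s) (B' * N + a) =
      (N%:Z - a%:Z) * (M' - 1) + a%:Z * M' + a%:Z * (N%:Z - a%:Z).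
    by move=> a ha; rewrite (FF_rec n B' N0 ha hc) eX eM.
  have FKv : FF N n.+1 (cc N m.+1 s) (B' * N + p).+1 = (2 * p%:Z + 1) * M' + p%:Z * p%:Z.
    rewrite -addnS FK; last by lia.
    rewrite NZ; ring.
  rewrite FKv.
  split.
  + rewrite FK; last by lia.
    rewrite NZ; ring.
  + move=> i; rewrite {1}(divn_eq i N) (FF_rec n _ N0 (ltnW (ltn_pmod i N0)) hc).
    set b := (i %/ N)%N; set a := (i %% N)%N.
    have ha : (a < N)%N by rewrite /a ltn_pmod.
    have hx := e2 b; have hy := e2 b.+1.
    have hxy := FF_S N n (cc N m s) b.
    have [u hu] : exists u, s = (2 * u)%N.
      exists (s %/ 2)%N; have := divn_eq s 2; rewrite modn2 (negbTE hs); lia.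
    have hcc : cc N m s = 2 * m%:Z * p%:Z + 2 * u%:Z - 1 by rewrite /cc NZ hu; lia.
    case: (ltrP (FF N n (cc N m s) b) M') => hxM.
    * have h1 : 0 <= (N%:Z - a%:Z) * (M' - 1 - FF N n (cc N m s) b) by apply: mulr_ge0; lia.
      have h2 : 0 <= a%:Z * (M' - FF N n (cc N m s) b.+1) by apply: mulr_ge0; lia.
      have h3 := ar3 a%:Z p%:Z.
      rewrite NZ in h1 *; lia.
    * have hyM : FF N n (cc N m s) b.+1 < M'.
        rewrite lt_neqAle hy andbT; apply/eqP => e.
        have exM : FF N n (cc N m s) b = M' by apply/eqP; rewrite eq_le hx hxM.
        rewrite e exM hcc in hxy; lia.
      have h1 : 0 <= (N%:Z - a%:Z) * (M' - FF N n (cc N m s) b) by apply: mulr_ge0; lia.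
      have h2 : 0 <= a%:Z * (M' - 1 - FF N n (cc N m s) b.+1) by apply: mulr_ge0; lia.
      have h3 := ar4 a%:Z p%:Z.
      rewrite NZ in h1 *; lia.
  + move=> i hi.
    have hb : (i %/ N <= B')%N by rewrite -ltnS ltn_divLR //; lia.
    have hdi := divn_eq i N.
    rewrite {1}(divn_eq i N) (FF_rec n _ N0 (ltnW (ltn_pmod i N0)) hc).
    set b := (i %/ N)%N in hb hdi *; set a := (i %% N)%N in hdi *.
    have ha : (a < N)%N by rewrite /a ltn_pmod.
    move: hb; rewrite leq_eqVlt => /orP [/eqP hb | hb].
    * rewrite hb eX eM.
      have hap : (a <= p)%N by rewrite hb in hdi; lia.
      have h3 := @ar5 a%:Z p%:Z.
      rewrite NZ; lia.
    * have hx := e3 b (ltnW hb); have hy := e3 b.+1 hb.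
      have h1 : 0 <= (N%:Z - a%:Z) * (M' - 1 - FF N n (cc N m s) b) by apply: mulr_ge0; lia.
      have h2 : 0 <= a%:Z * (M' - 1 - FF N n (cc N m s) b.+1) by apply: mulr_ge0; lia.
      have h3 := ar1 a%:Z p%:Z.
      rewrite NZ in h1 *; lia.
Qed.

Lemma max_ge_seq (R : realFieldType) (f : nat -> R) (idx : R) (r : seq nat) (x : nat) :
  x \in r -> f x <= \big[Num.max/idx]_(i <- r) f i.
Proof.
elim: r => [|y r IH] //; rewrite in_cons big_cons => /orP [/eqP -> | hx].
  by rewrite le_max lexx.
by rewrite le_max (IH hx) orbT.
Qed.

Lemma maxRange_eq (R : realFieldType) (f : nat -> R) (a b x : nat) (M : R) :
  (a <= x <= b)%N -> f x = M -> (forall i, (a <= i <= b)%N -> f i <= M) ->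
  maxRange f a b = M.
Proof.
move=> hx fx hle; apply/eqP; rewrite eq_le; apply/andP; split.
- rewrite /maxRange big_nat_cond.
  apply: (big_ind (fun y => y <= M)).
  + apply: hle; move/andP: hx => [h1 h2]; apply/andP; split => //; exact: leq_trans h2.
  + by move=> y z hy hz; rewrite ge_max hy hz.
  + move=> i /andP [/andP [h1 h2] _]; apply: hle; rewrite h1 /=; by rewrite -ltnS.
- rewrite -fx /maxRange; apply: max_ge_seq; rewrite mem_index_iota ltnS //.
Qed.

Lemma Hformula (R : realFieldType) (N n : nat) (Jt : R) (J : nat -> R) (m s : nat) :
  (0 < N)%N -> (m <= n)%N -> (1 <= s)%N ->
  (forall i, (1 <= i <= n)%N -> J i = Jt / (N ^ i)%:R) ->
  forall k, (k <= N ^ n)%N ->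
  Ham N n J (hms Jt N n m s) (gamma k) =
    Ham N n J (hms Jt N n m s) (gamma 0) + Jt / N%:R * (FF N n (cc N m s) k)%:~R.
Proof.
move=> N0 mn s1 hJ; elim=> [|k IH] hk; first by rewrite FF0 mulr0 addr0.
have hk' : (k < N ^ n)%N by [].
have e := ham_step J (hms Jt N n m s) hk'.
rewrite (A_val N0 hk' hJ) (B_val N0 hk' hJ) in e.
rewrite -(subrK (Ham N n J (hms Jt N n m s) (gamma k)) (Ham N n J (hms Jt N n m s) (gamma k.+1))).
rewrite e IH; last by lia.
rewrite FF_S /cc !(intrD, intrM, intrB) -!pmulrn /hms natrB // natrB //.
have NR : (N%:R : R) != 0 by rewrite pnatr_eq0; lia.
by field.
Qed.

Theorem proposition4p6 (R : realFieldType) (N n : nat) (Jt : R) (J : nat -> R)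
    (m s : nat) :
  (3 <= N)%N -> odd N -> (1 <= n)%N -> 0 < Jt ->
  (forall i, (1 <= i <= n)%N -> J i = Jt / (N ^ i)%:R) ->
  (m <= n - 1)%N -> (1 <= s <= N)%N ->
  let H := fun i : nat => Ham N n J (hms Jt N n m s) (gamma i) in
  (odd s ->
     let K := ((s * N ^ m) %/ 2)%N in
     [/\ H K = H K.+1,
         H K.+1 = maxRange H 1 (s * N ^ m),
         maxRange H 1 (s * N ^ m) = maxRange H 1 (N ^ n)
       & forall i, (i < K)%N -> H i < H K]) /\
  (~~ odd s ->
     let K := (((s - 1) * N ^ m) %/ 2).+1 in
     [/\ H K = maxRange H 1 (s * N ^ m),
         maxRange H 1 (s * N ^ m) = maxRange H 1 (N ^ n)
       & forall i, (i < K)%N -> H i < H K]).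
Proof.
move=> N3 oN n1 Jt0 hJ hm hsN H.
have N0 : (0 < N)%N by lia.
set p := (N %/ 2)%N.
have hN : N = (2 * p + 1)%N by rewrite /p {1}(divn_eq N 2) modn2 oN; lia.
have p0 : (0 < p)%N by lia.
have hmn : (m < n)%N by lia.
case/andP: (hsN) => s1 sN.
have Hk := Hformula N0 (ltnW hmn) s1 hJ.
have JN : 0 < Jt / N%:R by apply: divr_gt0 => //; rewrite ltr0n.
have Hle : forall i j, (i <= N ^ n)%N -> (j <= N ^ n)%N -> (FF N n (cc N m s) i <= FF N n (cc N m s) j) -> H i <= H j.
  by move=> i j hi hj hij; rewrite /H (Hk i) // (Hk j) // lerD2l ler_pM2l // ler_int.
have Hlt : forall i j, (i <= N ^ n)%N -> (j <= N ^ n)%N -> (FF N n (cc N m s) i < FF N n (cc N m s) j) -> H i < H j.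
  by move=> i j hi hj hij; rewrite /H (Hk i) // (Hk j) // ltrD2l ltr_pM2l // ltr_int.
have Heq : forall i j, (i <= N ^ n)%N -> (j <= N ^ n)%N -> (FF N n (cc N m s) i = FF N n (cc N m s) j) -> H i = H j.
  by move=> i j hi hj hij; rewrite /H (Hk i) // (Hk j) // hij.
have Nm0 : (0 < N ^ m)%N by rewrite expn_gt0 N0.
have sNm : (s * N ^ m <= N ^ n)%N.
  apply: (@leq_trans (N ^ m.+1)); first by rewrite expnS leq_mul2r sN orbT.
  by apply: leq_pexp2l.
have sNm1 : (1 <= s * N ^ m)%N by rewrite muln_gt0 s1 Nm0.
split.
- move=> hs K.
  have [e1 e2 e3] := main_odd hN p0 hmn hs hsN.
  have hK1 : (K.+1 <= s * N ^ m)%N by rewrite /K; lia.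
  have hKn : (K.+1 <= N ^ n)%N by apply: leq_trans sNm.
  have Mx : forall b, (1 <= b <= N ^ n)%N -> (K.+1 <= b)%N -> maxRange H 1 b = H K.+1.
    move=> b /andP [b1 bn] hb.
    apply: maxRange_eq => //; first by rewrite hb.
    move=> i /andP [i1 ib]; apply: Hle => //; first by lia.
    by rewrite -e1; apply: e2.
  split.
  + by apply: Heq => //; lia.
  + by rewrite Mx // sNm1.
  + by rewrite !Mx // ?sNm1 ?leqnn //; rewrite expn_gt0 N0.
  + move=> i hi; apply: Hlt; try lia.
    exact: e3.
- move=> hs K.
  have [e1 e2 e3] := main_even hN p0 hmn hs hsN.
  have hK1 : (K <= s * N ^ m)%N.
    rewrite /K mulnBl mul1n.
    have : (N ^ m <= s * N ^ m)%N by rewrite leq_pmull.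
    lia.
  have hKn : (K <= N ^ n)%N by apply: leq_trans sNm.
  have Mx : forall b, (1 <= b <= N ^ n)%N -> (K <= b)%N -> maxRange H 1 b = H K.
    move=> b /andP [b1 bn] hb.
    apply: maxRange_eq => //; first by rewrite hb.
    move=> i /andP [i1 ib]; apply: Hle => //; try lia.
  split.
  + by rewrite Mx // sNm1.
  + by rewrite !Mx // ?sNm1 ?leqnn //; rewrite expn_gt0 N0.
  + move=> i hi; apply: Hlt; try lia.
    rewrite /K; exact: e3.
Qed.
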